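(* Let $P$ be an $n\times n$ stochastic SIA matrix satisfying the pattern-symmetry condition $p_{ij}>0\Leftrightarrow p_{ji}>0$ for all $i\neq j$. Then (1) $P\in\mathcal S_2$, i.e., the SIA index of $P$ is at most $2$; and (2) if moreover $P$ is symmetric, then $P\in\mathcal S_1$, i.e., $P$ is a Sarymsakov matrix.
   Context: Let $\mathcal N=\{1,\ldots,n\}$. A matrix is stochastic if it is entrywise nonnegative with row sums $1$. For stochastic $P$ and $\mathcal A\subseteq\mathcal N$, $F_P(\mathcal A)=\{j:\ p_{ij}>0\text{ for some } i\in\mathcal A\}$, $F_P^1=F_P$, $F_P^k(\mathcal A)=F_P(F_P^{k-1}(\mathcal A))$. $P$ is SIA if $\lim_{m\to\infty}P^m=\mathbf 1c^T$ for some nonnegative $c$ with entries summing to $1$. For an SIA matrix $P$ and each unordered pair of disjoint nonempty sets $\mathcal A,\tilde{\mathcal A}\subseteq\mathcal N$, let $s(\mathcal A,\tilde{\mathcal A})$ be the smallest integer $k\ge1$ such that either (i) $F_P^k(\mathcal A)\cap F_P^k(\tilde{\mathcal A})\ne\emptyset$, or (ii) $F_P^k(\mathcal A)\cap F_P^k(\tilde{\mathcal A})=\emptyset$ and $|F_P^k(\mathcal A)\cup F_P^k(\tilde{\mathcal A})|>|\mathcal A\cup\tilde{\mathcal A}|$. The SIA index of $P$ is the maximum of $s(\mathcal A,\tilde{\mathcal A})$ over all such pairs. $\mathcal S_k$ is the set of $n\times n$ SIA matrices with SIA index at most $k$; $\mathcal S_1$ is the set of stochastic Sarymsakov matrices.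 *)

(* Defs.v *)
(* Matrices over an archimedean real field R (all such fields
   are ordered subfields of the reals, so entrywise convergence is the usual one). *)
From HB Require Import structures.
From mathcomp Require Import all_boot all_order all_algebra.
Set Implicit Arguments. Unset Strict Implicit. Unset Printing Implicit Defensive.
Import Order.TTheory GRing.Theory Num.Theory.
Local Open Scope ring_scope.

Section Defs.
Variable R : archiRealFieldType.
Variable n : nat.
Implicit Types (P : 'M[R]_n) (A B : {set 'I_n}).

Definition stochastic P : Prop :=
  (forall i j, 0 <= P i j) /\ (forall i, \sum_(j < n) P i j = 1).

Definition mxpow P (m : nat) : 'M[R]_n := iter m (mulmx P) 1%:M.

Definition SIA P : Prop :=
  exists c : 'I_n -> R,
    [/\ forall j, 0 <= c j, \sum_(j < n) c j = 1 &
        forall eps : R, 0 < eps -> exists N : nat, forall m : nat, (N <= m)%N ->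
          forall i j, `| mxpow P m i j - c j | < eps].

Definition F P A : {set 'I_n} := [set j | [exists i in A, 0 < P i j]].

Definition Fk P (k : nat) A : {set 'I_n} := iter k (F P) A.

Definition s_cond P A B (k : nat) : bool :=
  (Fk P k A :&: Fk P k B != set0) ||
  ((Fk P k A :&: Fk P k B == set0) && (#|A :|: B| < #|Fk P k A :|: Fk P k B|)%N).

(* P \in S_k : P is SIA and its SIA index is at most k, i.e. for every pair of
   disjoint nonempty sets the smallest k' >= 1 satisfying s_cond is <= k
   (equivalently, some k' in [1, k] satisfies s_cond). *)
Definition in_S (k : nat) P : Prop :=
  SIA P /\
  forall A B, A != set0 -> B != set0 -> [disjoint A & B] ->
    exists2 k' : nat, (1 <= k' <= k)%N & s_cond P A B k'.

Definition pattern_symmetric P : Prop :=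
  forall i j : 'I_n, i != j -> (0 < P i j) = (0 < P j i).

End Defs.

(* Main.v *)
Require Import Defs.
From HB Require Import structures.
From mathcomp Require Import all_boot all_order all_algebra.
From mathcomp Require Import lra zify.
Import Order.TTheory GRing.Theory Num.Theory.
Local Open Scope ring_scope.

Section Aux.
Variable R : archiRealFieldType.
Variable n : nat.
Variable P : 'M[R]_n.
Hypothesis Pge0 : forall i j, 0 <= P i j.

Lemma pos_path (m : nat) : forall (A : {set 'I_n}) i j,
  i \in A -> 0 < mxpow P m i j -> j \in Fk P m A.
Proof.
elim: m => [|m IH] A i j iA.
  rewrite /mxpow /= mxE /Fk /=; case: eqVneq => [<-//|]; by rewrite ltxx.
rewrite (_ : Fk P m.+1 A = Fk P m (F P A)); last exact: iterSr.
rewrite /mxpow /= mxE => hs.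
case: (boolP [exists k, (0 < P i k) && (0 < mxpow P m k j)]).
  case/existsP=> k /andP[hik hkj].
  apply: (IH _ k) => //.
  rewrite inE; apply/existsP; exists i; rewrite iA.
  exact: hik.
move=> hn; exfalso.
have : \sum_(k < n) P i k * iter m (mulmx P) 1%:M k j <= 0.
  apply: sumr_le0 => k _.
  case: (ltrP 0 (P i k)) => hik.
    apply: mulr_ge0_le0; first exact: ltW.
    rewrite leNgt; apply/negP => hkj; move/negP: hn; apply; apply/existsP; exists k.
    by rewrite hik.
  have -> : P i k = 0 by apply/eqP; rewrite eq_le hik Pge0.
  by rewrite mul0r.
by rewrite leNgt hs.
Qed.

Lemma Fk_even (A : {set 'I_n}) N : F P (F P A) = A -> Fk P (N.*2) A = A.
Proof.
move=> h; elim: N => [//|N IH].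
by rewrite doubleS /Fk /= -/(Fk P N.*2 A) IH h.
Qed.

Lemma nofix (A B : {set 'I_n}) : SIA P -> A != set0 -> B != set0 ->
  A :&: B = set0 -> F P (F P A) = A -> F P (F P B) = B -> False.
Proof.
move=> [c [c0 c1 cl]] /set0Pn[a aA] /set0Pn[b bB] AB hA hB.
have [j0 cj0] : exists j0, 0 < c j0.
  case: (boolP [exists j, 0 < c j]) => [/existsP[j hj]|hn]; first by exists j.
  exfalso; have : \sum_(j < n) c j <= 0.
    apply: sumr_le0 => j _; rewrite leNgt; apply/negP => hj.
    by move/negP: hn; apply; apply/existsP; exists j.
  by rewrite c1 ler10.
have [N hN] := cl _ cj0.
have hm : (N <= N.*2)%N by rewrite -addnn leq_addr.
have pos : forall i, 0 < mxpow P N.*2 i j0.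
  move=> i; have := hN _ hm i j0.
  rewrite ltr_norml => /andP[h1 _].
  lra.
have jA : j0 \in A by rewrite -(Fk_even A N hA); exact: (pos_path _ _ _ _ aA (pos a)).
have jB : j0 \in B by rewrite -(Fk_even B N hB); exact: (pos_path _ _ _ _ bB (pos b)).
by have := in_set0 j0; rewrite -AB inE jA jB.
Qed.

Lemma sub_FF (A : {set 'I_n}) : stochastic P -> pattern_symmetric P ->
  A \subset F P (F P A).
Proof.
move=> [P0 P1] ps; apply/subsetP => i iA.
have [j hj] : exists j, 0 < P i j.
  case: (boolP [exists j, 0 < P i j]) => [/existsP[j hj]|hn]; first by exists j.
  exfalso; have : \sum_(j < n) P i j <= 0.
    apply: sumr_le0 => j _; rewrite leNgt; apply/negP => hj.
    by move/negP: hn; apply; apply/existsP; exists j.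
  by rewrite P1 ler10.
have jF : j \in F P A by rewrite inE; apply/existsP; exists i; rewrite iA.
rewrite inE; apply/existsP; exists j; rewrite jF /=.
have [eij|ij] := eqVneq i j; first by rewrite -eij in hj *.
by rewrite -(ps _ _ ij).
Qed.

Lemma mass (A : {set 'I_n}) : stochastic P -> P^T = P ->
  (#|A| <= #|F P A|)%N /\
  (forall x j, x \notin A -> j \in F P A -> 0 < P x j -> (#|A| < #|F P A|)%N).
Proof.
move=> [P0 P1] Ps.
have col : forall j, \sum_i P i j = 1.
  move=> j; rewrite -(P1 j); apply: eq_bigr => i _.
  by rewrite -{1}Ps mxE.
set T := \sum_(i | i \notin A) \sum_(j in F P A) P i j.
have T0 : 0 <= T by apply: sumr_ge0 => i _; apply: sumr_ge0 => j _.
have eq1 : (#|F P A|)%:R = (#|A|)%:R + T :> R.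
  have -> : (#|F P A|)%:R = \sum_i \sum_(j in F P A) P i j :> R.
    rewrite exchange_big /= -sumr_const; apply: eq_bigr => j _; by rewrite col.
  rewrite (bigID (fun i => i \in A)) /=; congr (_ + _).
  rewrite -sumr_const; apply: eq_bigr => i iA; rewrite -(P1 i).
  rewrite [RHS](bigID (fun j => j \in F P A)) /= [X in _ = _ + X]big1 ?addr0 //.
  move=> j jF; apply/eqP; rewrite eq_le P0 andbT leNgt; apply/negP => hj.
  by move/negP: jF; apply; rewrite inE; apply/existsP; exists i; rewrite iA.
split.
  by rewrite -(ler_nat R) eq1 lerDl.
move=> x j xA jF hxj.
rewrite -(ltr_nat R) eq1 ltrDl.
apply: (lt_le_trans hxj).
rewrite /T (bigD1 x) //= (bigD1 j) //= -addrA lerDl.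
apply: addr_ge0; first by apply: sumr_ge0 => k _.
by apply: sumr_ge0 => i _; apply: sumr_ge0 => k _.
Qed.
End Aux.

Lemma card_squeeze (n : nat) (A B X Y : {set 'I_n}) :
  A \subset X -> B \subset Y -> A :&: B = set0 -> X :&: Y = set0 ->
  (#|X :|: Y| <= #|A :|: B|)%N -> #|X| = #|A| /\ #|Y| = #|B|.
Proof.
move=> sA sB AB XY h.
move: h; rewrite !cardsU AB XY !cards0 !subn0 => h.
have := subset_leq_card sA; have := subset_leq_card sB; lia.
Qed.

Lemma eq_of_card (n : nat) (A X : {set 'I_n}) : A \subset X -> #|X| = #|A| -> X = A.
Proof. by move=> s c; apply/eqP; rewrite eq_sym eqEcard s c leqnn. Qed.

Theorem proposition2 (R : archiRealFieldType) (n : nat) (P : 'M[R]_n) :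
  stochastic P -> SIA P -> pattern_symmetric P ->
  in_S 2 P /\ (P^T = P -> in_S 1 P).
Proof.
move=> st sia ps; have P0 := st.1.
split.
  split => // A B nA nB dAB; exists 2%N => //.
  have AB0 := disjoint_setI0 dAB.
  have sA := @sub_FF _ _ P A st ps; have sB := @sub_FF _ _ P B st ps.
  case: (eqVneq (F P (F P A) :&: F P (F P B)) set0) => [I0|I1]; last by rewrite /s_cond /Fk /= I1.
  rewrite /s_cond /Fk /= I0 eqxx /= ltnNge; apply/negP => hle.
  have [cA cB] := card_squeeze _ _ _ _ _ sA sB AB0 I0 hle.
  exact: (@nofix _ _ P P0 _ _ sia nA nB AB0 (eq_of_card _ _ _ sA cA) (eq_of_card _ _ _ sB cB)).
move=> Ps; split => // A B nA nB dAB; exists 1%N => //.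
have AB0 := disjoint_setI0 dAB.
have [mA mA'] := @mass _ _ P P0 A st Ps; have [mB mB'] := @mass _ _ P P0 B st Ps.
have sub : forall C : {set 'I_n}, (forall x j, x \notin C -> j \in F P C -> 0 < P x j -> (#|C| < #|F P C|)%N) ->
   #|F P C| = #|C| -> F P (F P C) = C.
  move=> C hC cC; apply/eqP; rewrite eqEsubset (@sub_FF _ _ P) // andbT.
  apply/subsetP => x; rewrite inE => /existsP[j /andP[jF hjx]].
  apply/negPn/negP => xC; have := hC x j xC jF.
  by rewrite -{1}Ps mxE hjx cC ltnn => /(_ isT).
case: (eqVneq (F P A :&: F P B) set0) => [I0|I1]; last by rewrite /s_cond /Fk /= I1.
rewrite /s_cond /Fk /= I0 eqxx /= ltnNge; apply/negP => hle.
move: hle; rewrite !cardsU AB0 I0 !cards0 !subn0 => hle.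
have cA : #|F P A| = #|A| by lia.
have cB : #|F P B| = #|B| by lia.
exact: (@nofix _ _ P P0 _ _ sia nA nB AB0 (sub A mA' cA) (sub B mB' cB)).
Qed.
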